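(* Let $k\geq 1$ be an integer and let $B\in M_{4k+3}(\mathbb{F}_2)$ be a non-derogative matrix. Then there exist $N,D\in M_{4k+3}(\mathbb{F}_2)$ with $B=N+D$, $N^2=0$ and $D^4=D$.
   Context: A square matrix is non-derogative if its minimal polynomial equals its characteristic polynomial. $\mathbb{F}_2$ denotes the field with two elements. *)

(* Defs.v *)
From mathcomp Require Import all_boot all_algebra.
Set Implicit Arguments. Unset Strict Implicit. Unset Printing Implicit Defensive.
Import GRing.Theory.
Local Open Scope ring_scope.

Definition nonderogative (F : fieldType) (n : nat) (A : 'M[F]_n.+1) : bool :=
  mxminpoly A == char_poly A.

(* Main.v *)
Require Import Defs.
From mathcomp Require Import all_boot all_algebra.
From Stdlib Require Import Classical.
From mathcomp Require Import zify.
Set Implicit Arguments. Unset Strict Implicit. Unset Printing Implicit Defensive.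
Import GRing.Theory.
Local Open Scope ring_scope.

Section PolyAux.
Variable F : fieldType.
Implicit Types p q d : {poly F}.

Lemma irred_coprime q d : irreducible_poly q -> ~~ (q %| d) -> coprimep q d.
Proof.
move=> [sq iq] nqd; rewrite /coprimep; apply: contraT => g1.
have := iq _ g1 (dvdp_gcdl q d) => gq.
by move: nqd; rewrite -(eqp_dvdl _ gq) dvdp_gcdr.
Qed.

Lemma dvd_pow_irred q : irreducible_poly q -> forall N d, d %| q ^+ N ->
  exists j, d %= q ^+ j.
Proof.
move=> iq; have q0 := irredp_neq0 iq.
elim=> [|N IH] d.
  by rewrite expr0 dvdp1 size_poly_eq1 => h; exists 0%N; rewrite expr0.
rewrite exprS => dq.
case qd: (q %| d).
  have e := divpK qd.
  have dq' : d %/ q %| q ^+ N by move: dq; rewrite -{1}e mulrC dvdp_mul2l.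
  have [j hj] := IH _ dq'.
  by exists j.+1; rewrite -{1}e exprSr; apply: eqp_mulr.
have cdq : coprimep d q by rewrite coprimep_sym; apply: irred_coprime => //; rewrite qd.
by move: dq; rewrite Gauss_dvdpr // => /IH.
Qed.

Lemma chain_irred q N M d1 d2 : irreducible_poly q -> d1 %| q ^+ N -> d2 %| q ^+ M ->
  (d1 %| d2) || (d2 %| d1).
Proof.
move=> iq /(dvd_pow_irred iq) [i hi] /(dvd_pow_irred iq) [j hj].
apply/orP; case: (leqP i j) => h.
  by left; rewrite (eqp_dvdl _ hi) (eqp_dvdr _ hj) dvdp_exp2l.
by right; rewrite (eqp_dvdl _ hj) (eqp_dvdr _ hi) dvdp_exp2l // ltnW.
Qed.

Lemma irred_dvd (b : {poly F}) : (1 < size b)%N -> exists q, irreducible_poly q /\ q %| b.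
Proof.
move=> sb.
suff H : forall k (d : {poly F}), (size d <= k)%N -> (1 < size d)%N -> d %| b ->
   exists q, irreducible_poly q /\ q %| b by apply: (H _ b (leqnn _) sb (dvdpp b)).
elim=> [|k IH] d sd sd1 db; first by move: (leq_trans sd1 sd).
case: (classic (exists d' : {poly F}, [/\ (1 < size d')%N, (size d' < size d)%N & d' %| d])).
  case=> d' [s1 s2 dd]; apply: (IH d') => //; first by rewrite -ltnS (leq_trans s2).
  exact: dvdp_trans dd db.
move=> nod; exists d; split => //; split => // d' s1 dd.
have d0 : d != 0 by rewrite -size_poly_gt0 (ltn_trans _ sd1).
have d'0 : d' != 0 by apply: dvdpN0 dd d0.
rewrite -dvdp_size_eqp //; rewrite eqn_leq dvdp_leq //=.
rewrite leqNgt; apply/negP => s2; apply: nod; exists d'; split => //.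
by rewrite ltn_neqAle eq_sym s1 size_poly_gt0.
Qed.

End PolyAux.
Section Cyclic.
Variables (F : fieldType) (n : nat) (B : 'M[F]_n.+1).

Definition annB (u : 'rV[F]_n.+1) (a : {poly F}) :=
  forall f, (u *m horner_mx B f == 0) = (a %| f).

Lemma hornerM_comm (p q : {poly F}) :
  horner_mx B (p * q) = horner_mx B q *m horner_mx B p.
Proof. by rewrite mulrC rmorphM mulmxE. Qed.

Lemma hornerMm (p q : {poly F}) :
  horner_mx B (p * q) = horner_mx B p *m horner_mx B q.
Proof. by rewrite rmorphM mulmxE. Qed.

Lemma ann_min (u : 'rV[F]_n.+1) (a : {poly F}) : a != 0 -> u *m horner_mx B a = 0 ->
  (forall g : {poly F}, g != 0 -> (size g < size a)%N -> u *m horner_mx B g != 0) -> annB u a.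
Proof.
move=> a0 ua amin f; apply/eqP/idP => [uf|].
  have e := divp_eq f a.
  have ur : u *m horner_mx B (f %% a) = 0.
    move: uf; rewrite {1}e rmorphD /= hornerM_comm mulmxDr mulmxA ua mul0mx add0r.
    by [].
  apply/modp_eq0P; apply/eqP; apply: contraT => r0.
  by move: (amin _ r0 (ltn_modpN0 _ a0)); rewrite ur eqxx.
case/dvdpP => q ->; by rewrite hornerM_comm mulmxA ua mul0mx.
Qed.

Lemma ann_exists (u : 'rV[F]_n.+1) : exists a, annB u a.
Proof.
suff H : forall k (f : {poly F}), (size f <= k)%N -> f != 0 -> u *m horner_mx B f = 0 ->
   exists a, annB u a.
  apply: (H _ (mxminpoly B) (leqnn _)).
    by rewrite -size_poly_gt0 size_mxminpoly.
  by rewrite mx_root_minpoly mulmx0.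
elim=> [|k IH] f sf f0 uf.
  by move: f0; rewrite -size_poly_gt0; move: sf; rewrite leqn0 => /eqP ->.
case: (classic (exists g : {poly F}, [/\ g != 0, (size g <= k)%N & u *m horner_mx B g = 0])).
  by case=> g [g0 sg ug]; apply: (IH g).
move=> nog; exists f; apply: ann_min => // g g0 sg; apply/eqP => ug.
by apply: nog; exists g; split => //; rewrite -ltnS (leq_trans sg).
Qed.

Lemma ann_dvd (u : 'rV[F]_n.+1) (a b : {poly F}) : annB u a -> annB u b -> a %| b.
Proof. by move=> ha hb; rewrite -ha hb dvdpp. Qed.

Lemma ann_neq0 (u : 'rV[F]_n.+1) (a : {poly F}) : annB u a -> a != 0.
Proof.
move=> ha; apply/eqP => a0; move: (ha (mxminpoly B)).
rewrite mx_root_minpoly mulmx0 eqxx a0 dvd0p => /esym/eqP m0.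
by move: (size_mxminpoly B); rewrite m0 size_poly0.
Qed.

Lemma annM (u : 'rV[F]_n.+1) (c e : {poly F}) : annB u (c * e) -> e != 0 -> annB (u *m horner_mx B e) c.
Proof.
move=> h e0 f; rewrite -mulmxA -hornerMm h [e * f]mulrC dvdp_mul2r //.
Qed.

Lemma ann_kill (u : 'rV[F]_n.+1) (a f : {poly F}) : annB u a -> a %| f ->
  u *m horner_mx B f = 0.
Proof. by move=> ha af; apply/eqP; rewrite ha. Qed.

Lemma ann_coprime (u w : 'rV[F]_n.+1) (a b : {poly F}) : annB u a -> annB w b -> coprimep a b ->
  annB (u + w) (a * b).
Proof.
move=> ha hb cab f; rewrite Gauss_dvdp //; apply/idP/idP.
  rewrite mulmxDl addr_eq0 => /eqP e.
  have e1 : u *m horner_mx B (f * b) = 0.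
    by rewrite hornerMm mulmxA e mulNmx -mulmxA -hornerM_comm (ann_kill hb (dvdp_mulIl b f)) oppr0.
  have e2 : w *m horner_mx B (f * a) = 0.
    have e' : w *m horner_mx B f = - (u *m horner_mx B f) by rewrite e opprK.
    by rewrite hornerMm mulmxA e' mulNmx -mulmxA -hornerM_comm (ann_kill ha (dvdp_mulIl a f)) oppr0.
  apply/andP; split.
    by rewrite -(Gauss_dvdpl _ cab) -ha e1.
  have cba : coprimep b a by rewrite coprimep_sym.
  by rewrite -(Gauss_dvdpl _ cba) -hb e2.
case/andP => af bf; rewrite mulmxDl.
by rewrite (ann_kill ha af) (ann_kill hb bf) addr0.
Qed.


Lemma ann_lcm k (b : {poly F}) : (size b <= k)%N -> forall (u w : 'rV[F]_n.+1) (a : {poly F}),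
  annB u a -> annB w b -> exists y c, [/\ annB y c, a %| c & b %| c].
Proof.
elim: k b => [|k IH] b sb u w a ha hb.
  by move: (ann_neq0 hb); rewrite -size_poly_gt0; move: sb; rewrite leqn0 => /eqP ->.
have b0 := ann_neq0 hb; have a0 := ann_neq0 ha.
case: (leqP (size b) 1) => sb1.
  have b1 : b %= 1.
    rewrite -size_poly_eq1 eqn_leq sb1 /=; by rewrite size_poly_gt0.
  by exists u, a; split; [exact: ha | exact: dvdpp | exact: dvdUp].
have [q [iq qb]] := irred_dvd sb1.
have q0 := irredp_neq0 iq.
set r := gdcop q b.
have rb : r %| b by apply: dvdp_gdco.
have crq : coprimep r q by apply: coprimep_gdco.
have brq : b %| r * q ^+ size b by apply: dvdp_gdcor.
have r0 : r != 0 by apply: dvdpN0 rb b0.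
set s := b %/ r.
have ebs : b = s * r by rewrite divpK.
have sq : s %| q ^+ size b by move: brq; rewrite {1}ebs mulrC dvdp_mul2l.
have s0 : s != 0 by apply: contra b0 => /eqP s0; rewrite ebs s0 mul0r.
case: (ltnP 1 (size r)) => sr.
  have qs : q %| s.
    have cqr : coprimep q r by rewrite coprimep_sym.
    by rewrite -(Gauss_dvdpl _ cqr) -ebs.
  have ss : (1 < size s)%N.
    by apply: (leq_trans iq.1); apply: dvdp_leq.
  have csr : coprimep s r.
    rewrite coprimep_sym; apply: (coprimep_dvdl sq); exact: coprimep_expr.
  have sizes : size b = (size s + size r).-1 by rewrite ebs size_mul.
  have hbr : annB w (r * s) by move=> f; rewrite hb ebs mulrC.
  have hbs : annB w (s * r) by move=> f; rewrite hb ebs.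
  have srk : (size r <= k)%N.
    rewrite -ltnS (leq_trans _ sb) // sizes; move: ss sr.
    case: (size s) => [|[|x]] //; case: (size r) => [|[|z]] //= _ _.
    lia.
  have ssk : (size s <= k)%N.
    rewrite -ltnS (leq_trans _ sb) // sizes; move: ss sr.
    case: (size s) => [|[|x]] //; case: (size r) => [|[|z]] //= _ _.
    lia.
  have [y1 [c1 [h1 ac1 rc1]]] := IH r srk u (w *m horner_mx B s) a ha (annM hbr s0).
  have [y2 [c2 [h2 c12 sc2]]] := IH s ssk y1 (w *m horner_mx B r) c1 h1 (annM hbs r0).
  exists y2, c2; split => //; first exact: dvdp_trans ac1 c12.
  by rewrite ebs Gauss_dvdp // sc2 (dvdp_trans rc1 c12).
have r1 : r %= 1 by rewrite -size_poly_eq1 eqn_leq sr size_poly_gt0 r0.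
have bq : b %| q ^+ size b.
  by move: brq; rewrite (eqp_dvdr _ (eqp_mulr (q ^+ size b) r1)) mul1r.
set a2 := gdcop q a.
have a2a : a2 %| a by apply: dvdp_gdco.
have caq : coprimep a2 q by apply: coprimep_gdco.
have aaq : a %| a2 * q ^+ size a by apply: dvdp_gdcor.
have a20 : a2 != 0 by apply: dvdpN0 a2a a0.
set a1 := a %/ a2.
have ea : a = a1 * a2 by rewrite divpK.
have a1q : a1 %| q ^+ size a by move: aaq; rewrite {1}ea mulrC dvdp_mul2l.
have a10 : a1 != 0 by apply: contra a0 => /eqP e0; rewrite ea e0 mul0r.
case/orP: (chain_irred iq a1q bq) => h.
  have ha' : annB u (a2 * a1) by move=> f; rewrite ha ea mulrC.
  have hu2 := annM ha' a10.
  have ca2b : coprimep a2 b.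
    by apply: (coprimep_dvdl bq); apply: coprimep_expr.
  exists (u *m horner_mx B a1 + w), (a2 * b); split.
  - exact: ann_coprime hu2 hb ca2b.
  - by rewrite ea mulrC dvdp_mul2l.
  - exact: dvdp_mulIr.
exists u, a; split; [exact: ha | exact: dvdpp |].
apply: (dvdp_trans h); rewrite ea; exact: dvdp_mulIl.
Qed.

Lemma cyclic_exists : exists y : 'rV[F]_n.+1,
  forall f, y *m horner_mx B f = 0 -> mxminpoly B %| f.
Proof.
have S : forall i, (i <= n.+1)%N -> exists (y : 'rV[F]_n.+1) (c : {poly F}), annB y c /\ forall j : 'I_n.+1, (j < i)%N -> forall a, annB (delta_mx 0 j) a -> a %| c.
  elim=> [|i IH] hi.
    exists 0, 1; split => // f; by rewrite mul0mx eqxx dvd1p.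
  have [y [c [hc hj]]] := IH (ltnW hi).
  have [a0 ha0] := ann_exists (delta_mx 0 (Ordinal hi)).
  have [y' [c' [hc' cc' ac']]] := ann_lcm (leqnn _) hc ha0.
  exists y', c'; split => // j ji a ha.
  move: ji; rewrite ltnS leq_eqVlt => /orP [/eqP ji|ji].
    have ej : j = Ordinal hi by apply: val_inj.
    rewrite ej in ha.
    exact: dvdp_trans (ann_dvd ha ha0) ac'.
  exact: dvdp_trans (hj j ji a ha) cc'.
have [y [c [hc hj]]] := S n.+1 (leqnn _).
have hc0 : horner_mx B c = 0.
  apply/row_matrixP => j; rewrite row0 rowE.
  have [a ha] := ann_exists (delta_mx 0 j).
  exact: ann_kill ha (hj j (ltn_ord j) a ha).
exists y => f yf.
apply: dvdp_trans (mxminpoly_min hc0) _.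
by rewrite -hc yf.
Qed.

End Cyclic.


From mathcomp Require Import ring.
Lemma f2_two : (2%:R : 'F_2) = 0. Proof. exact: (pchar_Fp_0 (isT : prime 2)). Qed.
Lemma f2_all (x : 'F_2) : x = 0 \/ x = 1.
Proof. case: x => -[|[|//]] H. left; exact: val_inj. right; exact: val_inj. Qed.
Lemma f2_add (x : 'F_2) : x + x = 0.
Proof. by case: (f2_all x) => ->; rewrite ?addr0 // -mulr2n f2_two. Qed.
Lemma f2_mul (x : 'F_2) : x * x = x.
Proof. by case: (f2_all x) => ->; rewrite ?mulr0 ?mulr1. Qed.
Lemma f2_addR (R : lmodType 'F_2) (v : R) : v + v = 0.
Proof. by rewrite -[v]scale1r -scalerDl f2_add scale0r. Qed.

Definition om : {poly 'F_2} := 'X^2 + ('X + 1).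
Definition fpol (j : nat) : {poly 'F_2} := 'X^(odd j) * om ^+ (j./2).

Lemma size_om : size om = 3%N.
Proof.
by rewrite /om size_polyDl size_polyXn // -polyC1 size_XaddC.
Qed.

Lemma monic_om : om \is monic.
Proof.
apply/monicP; rewrite /om lead_coefDl ?lead_coefXn // size_polyXn -polyC1 size_XaddC //.
Qed.

Lemma monic_fpol j : fpol j \is monic.
Proof. by rewrite /fpol monicMl ?monicXn // monic_exp // monic_om. Qed.

Lemma size_fpol j : size (fpol j) = j.+1.
Proof.
have m0 : om ^+ (j./2) != 0 by apply: monic_neq0; rewrite monic_exp // monic_om.
have s : size (om ^+ (j./2)) = (j./2).*2.+1.
  have := size_exp om (j./2); rewrite size_om /= mul2n => <-.
  by rewrite prednK // size_poly_gt0.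
rewrite /fpol size_monicM ?monicXn // size_polyXn s /=.
by rewrite addnS odd_double_half.
Qed.

Lemma fpol_even i : fpol (i.*2).+1 = fpol i.*2 * 'X.
Proof.
by rewrite /fpol /= odd_double /= uphalf_double half_double expr0 mul1r expr1 mulrC.
Qed.

Lemma fpol_odd i : fpol (i.*2).+1 * 'X = fpol (i.*2).+2 + fpol i.*2 + fpol (i.*2).+1.
Proof.
rewrite /fpol /= odd_double /= uphalf_double half_double expr0 !mul1r expr1 exprS.
rewrite /om.
have h2 : ('X + 'X : {poly 'F_2}) = 0 by apply: f2_addR.
have h1 : (1 + 1 : {poly 'F_2}) = 0 by apply: f2_addR.
set A := (_ ^+ i).
set RHS := (_ + _ + _).
transitivity (RHS - ('X + 'X) * A - (1 + 1) * A); last by rewrite h2 h1 !mul0r !subr0.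
rewrite /RHS; ring.
Qed.

Section Construct.
Variables (n : nat) (B : 'M['F_2]_n.+1) (y : 'rV['F_2]_n.+1).
Hypotheses (hn : ~~ odd n)
  (hy : forall f, y *m horner_mx B f = 0 -> mxminpoly B %| f)
  (hsz : size (mxminpoly B) = n.+2).

Definition w j := y *m horner_mx B (fpol j).
Definition P := \matrix_(i < n.+1) w i.

Lemma rowP_w (i : 'I_n.+1) : row i P = w i.
Proof. by rewrite rowK. Qed.

Lemma wB j : w j *m B = y *m horner_mx B (fpol j * 'X).
Proof. by rewrite /w [in RHS]rmorphM /= horner_mx_X -mulmxE mulmxA. Qed.

Lemma w_even i : w i.*2 *m B = w (i.*2).+1.
Proof. by rewrite wB -fpol_even. Qed.

Lemma w_odd i : w (i.*2).+1 *m B = w (i.*2).+2 + w i.*2 + w (i.*2).+1.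
Proof. by rewrite wB fpol_odd /w !rmorphD /= !mulmxDr. Qed.

Lemma sum_w (c : 'rV['F_2]_n.+1) :
  c *m P = y *m horner_mx B (\sum_(i < n.+1) c 0 i *: fpol i).
Proof.
rewrite mulmx_sum_row raddf_sum /= mulmx_sumr; apply: eq_bigr => i _.
by rewrite rowP_w horner_mxZ /w scalemxAr.
Qed.

Lemma w_indep (c : 'rV['F_2]_n.+1) : c *m P = 0 -> c = 0.
Proof.
rewrite sum_w => /hy md.
set g := (\sum_(i < n.+1) _) in md.
have sg : (size g <= n.+1)%N.
  rewrite /g; apply: (big_ind (fun p : {poly 'F_2} => (size p <= n.+1)%N)).
  - by rewrite size_poly0.
  - by move=> p q hp hq; rewrite (leq_trans (size_polyD _ _)) // geq_max hp hq.
  - move=> i _; rewrite (leq_trans (size_scale_leq _ _)) // size_fpol; exact: ltn_ord.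
have g0 : g = 0.
  apply/eqP; apply: contraT => g0.
  by have := dvdp_leq g0 md; rewrite hsz ltnNge sg.
have key : forall i : 'I_n.+1, (forall j : 'I_n.+1, (i < j)%N -> c 0 j = 0) -> c 0 i = 0.
  move=> i hi; have := congr1 (fun p : {poly 'F_2} => p`_i) g0.
  rewrite /g coef_sum coef0 (bigD1 i) //= big1.
    have f1 : (fpol i)`_i = 1.
      by have := monic_fpol i; rewrite monicE lead_coefE size_fpol => /eqP.
    by rewrite coefZ f1 mulr1 addr0.
  move=> j ji; rewrite coefZ; case: (ltngtP j i) => h.
  - by rewrite nth_default ?mulr0 // size_fpol.
  - by rewrite hi // mul0r.
  - by move: ji; rewrite (val_inj h) eqxx.
have H : forall d (i : 'I_n.+1), (n - i <= d)%N -> c 0 i = 0.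
  elim=> [|d IH] i hi; apply: key => j ij.
    by move: (ltn_ord j) hi; lia.
  by apply: IH; move: (ltn_ord j) hi ij; lia.
apply/rowP => i; rewrite mxE; apply: (H n); exact: leq_subr.
Qed.

Lemma P_unit : P \in unitmx.
Proof. by rewrite -row_free_unit; apply: inj_row_free; exact: w_indep. Qed.

Definition Mh := \matrix_(i < n.+1) (if odd i then w i.+1 else 0).
Definition Nc := invmx P *m Mh.
Definition Dc := B - Nc.

Lemma wN j : (j < n.+1)%N -> w j *m Nc = if odd j then w j.+1 else 0.
Proof.
move=> hj.
have -> : w j = row (Ordinal hj) P by rewrite rowP_w.
by rewrite -row_mul /Nc mulmxA mulmxV ?P_unit // mul1mx rowK.
Qed.

Lemma NN : Nc *m Nc = 0.
Proof.
have hP := P_unit.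
suff : P *m (Nc *m Nc) = 0 by move/(congr1 (mulmx (invmx P))); rewrite mulmx0 mulKmx.
apply/row_matrixP => i; rewrite row0 mulmxA row_mul row_mul rowP_w wN //.
case oi: (odd i) => //; last by rewrite mul0mx.
have hi : (i.+1 < n.+1)%N.
  have := ltn_ord i; rewrite ltnS leq_eqVlt => /orP [/eqP ei|] //.
  by move: oi hn; rewrite ei => ->.
by rewrite wN //= oi.
Qed.

Lemma wD_even i : (i.*2 < n.+1)%N -> w i.*2 *m Dc = w i.*2 *m B.
Proof. by move=> h; rewrite /Dc mulmxBr wN // odd_double subr0. Qed.

Lemma wD_odd i : ((i.*2).+1 < n.+1)%N -> w (i.*2).+1 *m Dc = w i.*2 + w (i.*2).+1.
Proof.
move=> h; rewrite /Dc mulmxBr wN //= odd_double /= w_odd.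
by rewrite addrC !addrA addNr add0r.
Qed.

Lemma c2 (V : lmodType 'F_2) (a : V) : a + a = 0. Proof. exact: f2_addR. Qed.

Definition Q := Dc ^+ 2 + Dc + 1.

Lemma nat_parity j : (exists i, j = i.*2) \/ (exists i, j = (i.*2).+1).
Proof.
rewrite -(odd_double_half j); case: (odd j) => /=; [right|left]; by exists j./2.
Qed.

Lemma wQ j : (j < n)%N -> w j *m Q = 0.
Proof.
move=> hj; rewrite /Q (mulmxDr _ (Dc ^+ 2 + Dc) 1) (mulmxDr _ (Dc ^+ 2) Dc) mulmx1 expr2 -mulmxE mulmxA.
case: (nat_parity j) => [] [i ei]; subst j.
  have h0 : (i.*2 < n.+1)%N by move: hj; rewrite -!mul2n; lia.
  have h1 : (i.*2.+1 < n.+1)%N by move: hj; rewrite -!mul2n; lia.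
  rewrite wD_even // w_even wD_odd //.
  set a := w i.*2; set b := w i.*2.+1.
  by rewrite -(addrA a b b) c2 addr0 c2.
have h1 : (i.*2.+1 < n.+1)%N by move: hj; rewrite -!mul2n; lia.
have h0 : (i.*2 < n.+1)%N by move: hj; rewrite -!mul2n; lia.
rewrite wD_odd // mulmxDl wD_even // w_even wD_odd //.
set a := w i.*2; set b := w i.*2.+1.
by rewrite -(addrA b (a + b) (a + b)) c2 addr0 c2.
Qed.

Lemma poly4a : ('X^4 : {poly 'F_2}) = 'X + ('X^2 + 'X + 1) * ('X^2 + 'X).
Proof.
have h : forall p : {poly 'F_2}, p + p = 0 by move=> p; apply: f2_addR.
transitivity (('X : {poly 'F_2}) + ('X^2 + 'X + 1) * ('X^2 + 'X) - ('X^3 + 'X^3) - ('X^2 + 'X^2) - ('X + 'X)).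
  ring.
by rewrite !h !subr0.
Qed.

Lemma poly4b : ('X^4 : {poly 'F_2}) = 'X + ('X^2 + 'X) * ('X^2 + 'X + 1).
Proof. by rewrite poly4a mulrC. Qed.

Lemma hornerQ : horner_mx Dc ('X^2 + 'X + 1) = Q.
Proof. by rewrite /Q !rmorphD /= rmorphXn /= horner_mx_X rmorph1. Qed.

Lemma hornerX2X : horner_mx Dc ('X^2 + 'X) = Dc ^+ 2 + Dc.
Proof. by rewrite !rmorphD /= rmorphXn /= horner_mx_X. Qed.

Lemma D4a : Dc ^+ 4 = Dc + Q * (Dc ^+ 2 + Dc).
Proof.
by rewrite -hornerQ -hornerX2X -[Dc in LHS]horner_mx_X -rmorphXn -rmorphM -[Dc in Dc + _]horner_mx_X -rmorphD /= poly4a.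
Qed.

Lemma D4b : Dc ^+ 4 = Dc + (Dc ^+ 2 + Dc) * Q.
Proof.
by rewrite -hornerQ -hornerX2X -[Dc in LHS]horner_mx_X -rmorphXn -rmorphM -[Dc in Dc + _]horner_mx_X -rmorphD /= poly4b.
Qed.

Lemma DQ : Dc * Q = Q * Dc.
Proof. by rewrite -hornerQ -!mulmxE; apply: comm_mx_horner. Qed.

Lemma wn_even : (n./2).*2 = n.
Proof. by rewrite -[RHS](odd_double_half n) (negPf hn). Qed.

Lemma D4 : Dc ^+ 4 = Dc.
Proof.
have hP := P_unit.
suff : P *m Dc ^+ 4 = P *m Dc by move/(congr1 (mulmx (invmx P))); rewrite !mulKmx.
apply/row_matrixP => i; rewrite !row_mul rowP_w.
have := ltn_ord i; rewrite ltnS leq_eqVlt => /orP [/eqP ein|hin]; last first.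
  by rewrite D4a mulmxDr -mulmxE mulmxA wQ // mul0mx addr0.
rewrite D4b mulmxDr -mulmxE mulmxA; suff -> : w i *m (Dc ^+ 2 + Dc) *m Q = 0 by rewrite addr0.
rewrite ein.
set u := w n *m Dc.
have hu : w n *m (Dc ^+ 2 + Dc) = u *m Dc + u by rewrite mulmxDr expr2 -mulmxE mulmxA.
rewrite hu.
set c := u *m invmx P.
have uc : u = c *m P by rewrite /c mulmxKV.
have : u = \sum_(j < n) c 0 (widen_ord (leqnSn n) j) *: w j + c 0 ord_max *: w n.
  by rewrite {1}uc mulmx_sum_row big_ord_recr /=; congr (_ + _); [apply: eq_bigr => j _|]; rewrite rowP_w.
set u' := \sum_(j < n) _; set a := c 0 ord_max => eu.
have u'Q : u' *m Q = 0.
  rewrite /u' mulmx_suml big1 // => j _; rewrite -scalemxAl wQ // scaler0 //.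
have wnD : w n *m Dc = u by [].
have e : u *m Dc + u = u' *m Dc + u' + a *: u' + (a * a + a) *: w n.
  rewrite {1}eu mulmxDl -scalemxAl wnD eu.
  rewrite scalerDr scalerA scalerDl.
  by rewrite -!addrA; congr (_ + _); rewrite [RHS]addrCA; congr (_ + _); rewrite addrCA.
rewrite e f2_mul f2_add scale0r addr0 !mulmxDl -scalemxAl u'Q scaler0 addr0 addr0.
by rewrite -mulmxA mulmxE DQ -mulmxE mulmxA u'Q mul0mx.
Qed.

End Construct.

Theorem corollary2p14 (k : nat) (hk : (1 <= k)%N)
    (B : 'M['F_2]_((4 * k + 2).+1)) :
  nonderogative B ->
  exists N D : 'M['F_2]_((4 * k + 2).+1),
    [/\ B = N + D, N *m N = 0 & D ^+ 4 = D].
Proof.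
move=> nd.
have [y hy] := cyclic_exists B.
have hsz : size (mxminpoly B) = (4 * k + 2).+2.
  by move/eqP: nd => ->; rewrite size_char_poly.
have hn : ~~ odd (4 * k + 2).
  have -> : (4 * k + 2 = (2 * k + 1).*2)%N by rewrite -mul2n; lia.
  by rewrite odd_double.
exists (Nc B y), (Dc B y); split.
- by rewrite /Dc addrC subrK.
- exact: NN hn hy hsz.
- exact: D4 hn hy hsz.
Qed.
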